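(* Let $A_1,A_2$ be bounded operators on a Hilbert space $\mathcal H$. The following are equivalent: (1) $(A_1,A_2)$ is almost normal; (2) $A_1^*+A_2z$ and $A_2^*+A_1z$ commute for every $z\in\mathbb T$; (3) $A_2^*+A_1z$ is normal for every $z\in\mathbb T$; (4) $A_1^*+A_2z$ is normal for every $z\in\mathbb T$.
   Context: A pair $(A_1,A_2)$ is almost normal if $A_1A_2=A_2A_1$ and $A_1^*A_1-A_1A_1^*=A_2^*A_2-A_2A_2^*$. *)

(* Defs.v *)
From mathcomp Require Import all_boot all_algebra.
From mathcomp Require Import complex reals.
Set Implicit Arguments. Unset Strict Implicit. Unset Printing Implicit Defensive.
Import GRing.Theory Num.Theory.
Local Open Scope ring_scope.
Local Open Scope complex_scope.

Definition is_inner_product (R : realType) (H : lmodType R[i])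
  (ip : H -> H -> R[i]) : Prop :=
  [/\ (forall (a : R[i]) (x y z : H), ip (a *: x + y) z = a * ip x z + ip y z),
      (forall x y : H, ip y x = (ip x y)^*),
      (forall x : H, 0 <= ip x x)
    & (forall x : H, ip x x = 0 -> x = 0)].

(* Completeness w.r.t. the norm ||x|| = sqrt (ip x x)
   (stated with squared norms). *)
Definition ip_complete (R : realType) (H : lmodType R[i])
  (ip : H -> H -> R[i]) : Prop :=
  forall u : nat -> H,
    (forall e : R[i], 0 < e -> exists N : nat, forall m n : nat,
        (N <= m)%N -> (N <= n)%N -> ip (u m - u n) (u m - u n) < e) ->
    exists l : H, forall e : R[i], 0 < e -> exists N : nat, forall n : nat,
        (N <= n)%N -> ip (u n - l) (u n - l) < e.

Definition is_hilbert (R : realType) (H : lmodType R[i])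
  (ip : H -> H -> R[i]) : Prop :=
  is_inner_product ip /\ ip_complete ip.

Definition bounded_op (R : realType) (H : lmodType R[i])
  (ip : H -> H -> R[i]) (A : H -> H) : Prop :=
  linear A /\ exists M : R, forall x : H, ip (A x) (A x) <= M%:C * ip x x.

Definition is_adjoint (R : realType) (H : lmodType R[i])
  (ip : H -> H -> R[i]) (A B : H -> H) : Prop :=
  forall x y : H, ip (A x) y = ip x (B y).

Definition op_commute (R : realType) (H : lmodType R[i]) (S T : H -> H) : Prop :=
  forall x : H, S (T x) = T (S x).

Definition normal_op (R : realType) (H : lmodType R[i])
  (ip : H -> H -> R[i]) (T : H -> H) : Prop :=
  exists Ts : H -> H, is_adjoint ip T Ts /\ op_commute T Ts.

(* (A1, A2) almost normal, A1s, A2s being the adjoints of A1, A2. *)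
Definition almost_normal (R : realType) (H : lmodType R[i])
  (A1 A1s A2 A2s : H -> H) : Prop :=
  op_commute A1 A2 /\
  forall x : H, A1s (A1 x) - A1 (A1s x) = A2s (A2 x) - A2 (A2s x).

(* Main.v *)
Require Import Defs.
From mathcomp Require Import all_boot all_algebra.
From mathcomp Require Import complex reals.
From mathcomp Require Import ring.
Import GRing.Theory Num.Theory.
Local Open Scope ring_scope.
Local Open Scope complex_scope.

Section Aux.
Variable F : fieldType.

Lemma S1 (j : F) (hj : j * j = -1) (h2 : (2 : F) != 0) (a b c : F) :
  a + 1 * b + (1 * 1) * c = 0 -> a + (-1) * b + ((-1) * (-1)) * c = 0 ->
  a + j * b + (j * j) * c = 0 -> b = 0 /\ c = 0.
Proof.
rewrite hj => e1 e2 e3.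
have hb : b = 0.
  have -> : b = ((a + 1 * b + (1 * 1) * c) - (a + (-1) * b + ((-1) * (-1)) * c)) / 2.
    by field.
  by rewrite e1 e2 subrr mul0r.
split=> //.
have -> : c = ((a + 1 * b + (1 * 1) * c) - (a + j * b + (-1) * c) - (1 - j) * b) / 2.
  field; first by rewrite ?hj ?h2 ?andbT.
by rewrite e1 e3 hb mulr0 !subrr mul0r.
Qed.

Lemma S2 (j : F) (hj : j != 0) (h2 : (2 : F) != 0) (a b c : F) :
  a + 1 * b + 1 * c = 0 -> a + (-1) * b + (-1) * c = 0 ->
  a + j * b + (- j) * c = 0 -> a = 0 /\ b = 0.
Proof.
move=> e1 e2 e3.
have ha : a = ((a + 1 * b + 1 * c) + (a + (-1) * b + (-1) * c)) / 2 by field.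
rewrite e1 e2 addr0 mul0r in ha.
split=> //.
have -> : b = ((a + 1 * b + 1 * c) - a + ((a + j * b + (- j) * c) - a) / j) / 2.
  field; first by rewrite ?hj ?h2 ?andbT.
by rewrite e1 e3 ha !subrr mul0r addr0 mul0r.
Qed.
End Aux.
Arguments S1 [F j] hj h2 [a b c].
Arguments S2 [F j] hj h2 [a b c].

Section Main.
Variables (R : realType) (H : lmodType R[i]) (ip : H -> H -> R[i]).
Hypothesis hip : is_inner_product ip.

Definition lin (f : H -> H) := forall (a : R[i]) (u v : H), f (a *: u + v) = a *: f u + f v.

Lemma zero_trick (x : R[i]) : x = x + x -> x = 0.
Proof. by move=> e; have := addrK x x; rewrite -e subrr. Qed.

Lemma zero_trickH (x : H) : x = x + x -> x = 0.
Proof. by move=> e; have := addrK x x; rewrite -e subrr. Qed.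

Lemma f0 f : lin f -> f 0 = 0.
Proof. move=> hf; apply: zero_trickH; have := hf 1 0 0. by rewrite scaler0 addr0 scale1r. Qed.

Lemma fD f : lin f -> forall u v, f (u + v) = f u + f v.
Proof. by move=> hf u v; have := hf 1 u v; rewrite !scale1r. Qed.

Lemma fZ f : lin f -> forall a u, f (a *: u) = a *: f u.
Proof. by move=> hf a u; have := hf a u 0; rewrite !addr0 f0 // addr0. Qed.

Lemma ip0l z : ip 0 z = 0.
Proof.
case: hip => h _ _ _; apply: zero_trick; have := h 1 0 0 z.
by rewrite scaler0 addr0 mul1r.
Qed.

Lemma ipDl x y z : ip (x + y) z = ip x z + ip y z.
Proof. by case: hip => h _ _ _; have := h 1 x y z; rewrite scale1r mul1r. Qed.

Lemma ipZl a x z : ip (a *: x) z = a * ip x z.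
Proof. by case: hip => h _ _ _; have := h a x 0 z; rewrite addr0 ip0l addr0. Qed.

Lemma ipC x y : ip y x = (ip x y)^*.
Proof. by case: hip. Qed.

Lemma ipDr x y z : ip x (y + z) = ip x y + ip x z.
Proof. by rewrite ipC ipDl rmorphD (ipC y x) (ipC z x). Qed.

Lemma ipZr a x y : ip x (a *: y) = a^* * ip x y.
Proof. by rewrite ipC ipZl rmorphM (ipC y x). Qed.

Lemma ipNl x z : ip (- x) z = - ip x z.
Proof. by rewrite -scaleN1r ipZl mulN1r. Qed.

Lemma ipNr x z : ip z (- x) = - ip z x.
Proof. by rewrite ipC ipNl rmorphN (ipC x z). Qed.

Lemma nondegR u v : (forall w, ip w u = ip w v) -> u = v.
Proof.
move=> h; apply/eqP; rewrite -subr_eq0; apply/eqP.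
case: hip => _ _ _ hd; apply: hd.
by rewrite ipDr ipNr h subrr.
Qed.

Lemma nondegL u v : (forall w, ip u w = ip v w) -> u = v.
Proof. by move=> h; apply: nondegR => w; rewrite ipC h -ipC. Qed.

Lemma adjL A B : is_adjoint ip A B -> forall x y, ip (B x) y = ip x (A y).
Proof. by move=> h x y; rewrite ipC -h -ipC. Qed.

Lemma adj_lin A B : is_adjoint ip A B -> lin B.
Proof.
move=> h a u v; apply: nondegR => w.
by rewrite -h ipDr ipZr ipDr ipZr !h.
Qed.

Lemma adj_uniq A B B' : is_adjoint ip A B -> is_adjoint ip A B' -> forall x, B x = B' x.
Proof. by move=> h h' x; apply: nondegR => w; rewrite -h -h'. Qed.

Lemma adj_comm A1 A2 A1s A2s : is_adjoint ip A1 A1s -> is_adjoint ip A2 A2s ->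
  op_commute A1 A2 -> op_commute A1s A2s.
Proof.
move=> h1 h2 hc x; apply: nondegR => w.
by rewrite -h1 -h2 -h2 -h1 hc.
Qed.


Arguments f0 [f].
Arguments fD [f].
Arguments fZ [f].
Arguments adjL [A B].
Arguments adj_lin [A B].
Arguments adj_uniq [A B B'].
Arguments adj_comm [A1 A2 A1s A2s].

Lemma ci_norm : `|('i%R : R[i])| = 1. Proof. exact: normCi. Qed.
Lemma ci_conj : ('i%R : R[i])^* = - 'i%R. Proof. exact: conjCi. Qed.
Lemma ci_sq : ('i%R : R[i]) * 'i%R = - 1. Proof. by rewrite -expr2 sqrCi. Qed.
Lemma unit_conj (z : R[i]) : `|z| = 1 -> z * z^* = 1.
Proof. by move=> h; rewrite -normCK h expr1n. Qed.
Lemma unit_nz (z : R[i]) : `|z| = 1 -> z != 0.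
Proof. by move=> h; apply/eqP => z0; move: h; rewrite z0 normr0 => /eqP; rewrite eq_sym oner_eq0. Qed.
Arguments unit_conj [z].
Arguments unit_nz [z].
Lemma unit_inv (z : R[i]) : `|z| = 1 -> z^* = z^-1.
Proof.
move=> h; by rewrite -[RHS]mul1r -(unit_conj h) mulrC mulKf ?unit_nz.
Qed.
Arguments unit_inv [z].
Lemma unit_invN (z : R[i]) : `|z| = 1 -> Num.conj z = z^-1.
Proof. exact: unit_inv. Qed.
Arguments unit_invN [z].
Lemma two_nz : (2 : R[i]) != 0. Proof. by rewrite pnatr_eq0. Qed.
Lemma ci_nz : ('i%R : R[i]) != 0. Proof. by apply: unit_nz; exact: ci_norm. Qed.

Variables (A1 A2 A1s A2s : H -> H).
Hypotheses (l1 : lin A1) (l2 : lin A2)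
  (h1 : is_adjoint ip A1 A1s) (h2 : is_adjoint ip A2 A2s).

Let l1s := adj_lin h1.
Let l2s := adj_lin h2.

Ltac expand := do 5 rewrite ?(fD l1) ?(fD l2) ?(fD l1s) ?(fD l2s)
   ?(fZ l1) ?(fZ l2) ?(fZ l1s) ?(fZ l2s) ?ipDl ?ipZl.
Ltac expandin e := do 5 rewrite ?(fD l1) ?(fD l2) ?(fD l1s) ?(fD l2s)
   ?(fZ l1) ?(fZ l2) ?(fZ l1s) ?(fZ l2s) ?ipDl ?ipZl in e.

Lemma an_scal : almost_normal A1 A1s A2 A2s -> forall x w,
  [/\ ip (A1 (A2 x)) w = ip (A2 (A1 x)) w,
      ip (A1s (A2s x)) w = ip (A2s (A1s x)) w &
      ip (A1s (A1 x)) w = ip (A1 (A1s x)) w + ip (A2s (A2 x)) w - ip (A2 (A2s x)) w].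
Proof.
case=> hc he x w; split.
- by rewrite hc.
- by rewrite (adj_comm h1 h2 hc).
have e := congr1 (fun v => ip v w) (he x); rewrite /= !ipDl !ipNl in e.
by rewrite -addrA -e addrC subrK.
Qed.

Lemma P01 : almost_normal A1 A1s A2 A2s <->
  (forall z : R[i], `|z| = 1 ->
     op_commute (fun x => A1s x + z *: A2 x) (fun x => A2s x + z *: A1 x)).
Proof.
split.
  move=> han z hz x; apply: nondegL => w /=; expand.
  case: (an_scal han x w) => -> -> ->; ring.
move=> h.
have E : forall x w z, `|z| = 1 ->
  (ip (A1s (A2s x)) w - ip (A2s (A1s x)) w) +
  z * ((ip (A1s (A1 x)) w + ip (A2 (A2s x)) w) - (ip (A2s (A2 x)) w + ip (A1 (A1s x)) w)) +
  (z * z) * (ip (A2 (A1 x)) w - ip (A1 (A2 x)) w) = 0.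
  move=> x w z hz.
  have e := congr1 (fun v => ip v w) (h z hz x); rewrite /= in e; expandin e.
  move/eqP: e; rewrite -subr_eq0 => /eqP <-; ring.
have K x w := S1 ci_sq two_nz
   (E x w 1 (normr1 _)) (E x w (-1) (normrN1 _)) (E x w _ ci_norm).
split.
  move=> x; apply: nondegL => w; case: (K x w) => _ /eqP.
  by rewrite subr_eq0 => /eqP.
move=> x; apply: nondegL => w; rewrite !ipDl !ipNl.
case: (K x w) => /eqP; rewrite subr_eq0 => /eqP e _.
have -> : ip (A1s (A1 x)) w - ip (A1 (A1s x)) w =
  (ip (A1s (A1 x)) w + ip (A2 (A2s x)) w) - ip (A1 (A1s x)) w - ip (A2 (A2s x)) w by ring.
rewrite e; ring.
Qed.


Lemma adjT (z : R[i]) : is_adjoint ip (fun x => A2s x + z *: A1 x) (fun x => A2 x + z^* *: A1s x).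
Proof. by move=> x y /=; rewrite ipDl ipZl ipDr ipZr (adjL h2) h1 conjCK. Qed.

Lemma adjS (z : R[i]) : is_adjoint ip (fun x => A1s x + z *: A2 x) (fun x => A1 x + z^* *: A2s x).
Proof. by move=> x y /=; rewrite ipDl ipZl ipDr ipZr (adjL h1) h2 conjCK. Qed.

Lemma inv_i : ('i%R : R[i])^-1 = - 'i%R.
Proof. by rewrite -(unit_inv ci_norm) ci_conj. Qed.

Lemma P02 : almost_normal A1 A1s A2 A2s <->
  (forall z : R[i], `|z| = 1 -> normal_op ip (fun x => A2s x + z *: A1 x)).
Proof.
split.
  move=> han z hz; exists (fun x => A2 x + z^* *: A1s x); split; first exact: adjT.
  move=> x; apply: nondegL => w /=; expand.
  case: (an_scal han x w) => -> -> ->.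
  rewrite (unit_invN hz); field; exact: (unit_nz hz).
move=> h.
have E : forall x w z, `|z| = 1 ->
  ((ip (A2s (A2 x)) w + ip (A1 (A1s x)) w) - (ip (A2 (A2s x)) w + ip (A1s (A1 x)) w)) +
  z * (ip (A1 (A2 x)) w - ip (A2 (A1 x)) w) +
  z^-1 * (ip (A2s (A1s x)) w - ip (A1s (A2s x)) w) = 0.
  move=> x w z hz.
  case: (h z hz) => Ts [ha hc].
  have hu := adj_uniq (adjT z) ha.
  have e := hc x; rewrite -!hu /= in e.
  have {}e := congr1 (fun v => ip v w) e; rewrite /= in e; expandin e.
  rewrite ?(unit_invN hz) ?(unit_inv hz) in e.
  move/eqP: e; rewrite -subr_eq0 => /eqP <-; field; exact: (unit_nz hz).
split=> x; apply: nondegL => w;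
  have e1 := E x w 1 (normr1 _); rewrite invr1 in e1;
  have e2 := E x w (-1) (normrN1 _); rewrite invrN1 in e2;
  have e3 := E x w _ ci_norm; rewrite inv_i in e3;
  case: (S2 ci_nz two_nz e1 e2 e3) => ha hb.
  by move/eqP: hb; rewrite subr_eq0 => /eqP.
rewrite !ipDl !ipNl.
move/eqP: ha; rewrite subr_eq0 => /eqP e.
have -> : ip (A2s (A2 x)) w - ip (A2 (A2s x)) w =
  (ip (A2s (A2 x)) w + ip (A1 (A1s x)) w) - ip (A1 (A1s x)) w - ip (A2 (A2s x)) w by ring.
rewrite e; ring.
Qed.


Lemma P03 : almost_normal A1 A1s A2 A2s <->
  (forall z : R[i], `|z| = 1 -> normal_op ip (fun x => A1s x + z *: A2 x)).
Proof.
split.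
  move=> han z hz; exists (fun x => A1 x + z^* *: A2s x); split; first exact: adjS.
  move=> x; apply: nondegL => w /=; expand.
  case: (an_scal han x w) => -> -> ->.
  rewrite (unit_invN hz); field; exact: (unit_nz hz).
move=> h.
have E : forall x w z, `|z| = 1 ->
  ((ip (A1s (A1 x)) w + ip (A2 (A2s x)) w) - (ip (A1 (A1s x)) w + ip (A2s (A2 x)) w)) +
  z * (ip (A2 (A1 x)) w - ip (A1 (A2 x)) w) +
  z^-1 * (ip (A1s (A2s x)) w - ip (A2s (A1s x)) w) = 0.
  move=> x w z hz.
  case: (h z hz) => Ts [ha hc].
  have hu := adj_uniq (adjS z) ha.
  have e := hc x; rewrite -!hu /= in e.
  have {}e := congr1 (fun v => ip v w) e; rewrite /= in e; expandin e.
  rewrite ?(unit_invN hz) ?(unit_inv hz) in e.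
  move/eqP: e; rewrite -subr_eq0 => /eqP <-; field; exact: (unit_nz hz).
split=> x; apply: nondegL => w;
  have e1 := E x w 1 (normr1 _); rewrite invr1 in e1;
  have e2 := E x w (-1) (normrN1 _); rewrite invrN1 in e2;
  have e3 := E x w _ ci_norm; rewrite inv_i in e3;
  case: (S2 ci_nz two_nz e1 e2 e3) => ha hb.
  by move/eqP: hb; rewrite subr_eq0 => /eqP.
rewrite !ipDl !ipNl.
move/eqP: ha; rewrite subr_eq0 => /eqP e.
have -> : ip (A1s (A1 x)) w - ip (A1 (A1s x)) w =
  (ip (A1s (A1 x)) w + ip (A2 (A2s x)) w) - ip (A1 (A1s x)) w - ip (A2 (A2s x)) w by ring.
rewrite e; ring.
Qed.

End Main.

Theorem lemma4p7 (R : realType) (H : lmodType R[i]) (ip : H -> H -> R[i])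
  (hH : is_hilbert ip) (A1 A2 A1s A2s : H -> H)
  (hA1 : bounded_op ip A1) (hA2 : bounded_op ip A2)
  (hA1s : is_adjoint ip A1 A1s) (hA2s : is_adjoint ip A2 A2s) :
  [<-> almost_normal A1 A1s A2 A2s;
       forall z : R[i], `|z| = 1 ->
         op_commute (fun x => A1s x + z *: A2 x) (fun x => A2s x + z *: A1 x);
       forall z : R[i], `|z| = 1 -> normal_op ip (fun x => A2s x + z *: A1 x);
       forall z : R[i], `|z| = 1 -> normal_op ip (fun x => A1s x + z *: A2 x)].
Proof.
have hip := hH.1.
have l1 : @lin R H A1 := hA1.1.
have l2 : @lin R H A2 := hA2.1.
have p1 := @P01 R H ip hip A1 A2 A1s A2s l1 l2 hA1s hA2s.
have p2 := @P02 R H ip hip A1 A2 A1s A2s l1 l2 hA1s hA2s.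
have p3 := @P03 R H ip hip A1 A2 A1s A2s l1 l2 hA1s hA2s.
tfae=> h.
- exact: p1.1.
- exact: p2.1 (p1.2 h).
- exact: p3.1 (p2.2 h).
- exact: p3.2 h.
Qed.
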